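(* Consider the two-sided market model described in the context and the social welfare $$\mathcal S(x_t,y_t)=\int_{x_t}^{\infty}\phi\Big(\frac{\sqrt{T_0\int_{y_t}^{\infty}y^{1-\beta}dy}}{\sqrt{\int_{x_t}^{\infty}x^{1-\gamma}dx}}\,x\Big)x^{-\gamma}dx+\lambda\sqrt{T_0}\sqrt{\int_{x_t}^{\infty}x^{1-\gamma}dx}\sqrt{\int_{y_t}^{\infty}y^{1-\beta}dy}-a\int_{y_t}^{\infty}y^{1-\beta}dy$$ over $x_t\ge x_0$, $y_t\ge y_0$. Then the welfare-maximizing thresholds are $x_t=x_0$ and $$y_t=\begin{cases} y_0, & \text{if } a\leq \frac{1}{2}\big(\int_{x_0}^{\infty}\phi'(x\bar Y)x^{1-\gamma}dx+\lambda \bar X\big),\\ \widehat{y}, & \text{if } a> \frac{1}{2}\big(\int_{x_0}^{\infty}\phi'(x\bar Y)x^{1-\gamma}dx+\lambda \bar X\big),\end{cases}$$ where $\widehat y$ is the solution $y_t$ of $$a-\frac{1}{2}\Big(\int_{x_0}^{\infty}\phi'\Big(x\sqrt{\bar Y\textstyle\int_{y_t}^{\infty}y^{1-\beta}dy}\Big)x^{1-\gamma}dx+\lambda \bar X\Big)\frac{\sqrt{\bar Y}}{\sqrt{\int_{y_t}^{\infty}y^{1-\beta}dy}}=0.$$ In terms of prices implementing the social optimum: if $a\leq \frac{1}{2}(\int_{x_0}^{\infty}\phi'(x\bar Y)x^{1-\gamma}dx+\lambda \bar X)$, then $\widehat b_{opt}\le \frac{\lambda}{\gamma-2}x_0^{2-\gamma}-a$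 and $\widehat c_{opt}\le \phi(\frac{1}{\beta-2}y_0^{2-\beta}x_0)$; if $a> \frac{1}{2}(\int_{x_0}^{\infty}\phi'(x\bar Y)x^{1-\gamma}dx+\lambda \bar X)$, then $$\widehat b_{opt}=\Big(\frac{2\lambda}{\frac{1}{\bar X}\int_{x_0}^{\infty}\phi'\big(\sqrt{\bar Y\frac{1}{\beta-2}\widehat{y}^{2-\beta}}\,x\big)x^{1-\gamma}dx+\lambda}-1\Big)a,\qquad \widehat c_{opt}\le \phi\Big(\sqrt{\bar Y\tfrac{1}{\beta-2}\widehat{y}^{2-\beta}}\,x_0\Big).$$
   Context: Model (a monopolist ISP between consumers and content providers (CPs)). Fix exponents $\gamma>2$, $\beta>2$. Consumer types $x$ have density $x^{-\gamma}$ on $x\ge x_0:=(\frac{1}{\gamma-1})^{\frac{1}{\gamma-1}}$; CP types $y$ have density $y^{-\beta}$ on $y\ge y_0:=(\frac{1}{\beta-1})^{\frac{1}{\beta-1}}$. $\bar X=\int_{x_0}^\infty x^{1-\gamma}dx=\frac{x_0^{2-\gamma}}{\gamma-2}$, $\bar Y=\int_{y_0}^\infty y^{1-\beta}dy=\frac{y_0^{2-\beta}}{\beta-2}$, $T_0=\bar X\bar Y$. If consumers of types $\ge x_t$ and CPs of types $\ge y_t$ participate, total traffic is $T=\sqrt{T_0\int_{x_t}^\infty x^{1-\gamma}dx\int_{y_t}^\infty y^{1-\beta}dy}$ and speed is $T_0/T$. A participating consumer of type $x$ gets utility $\phi\big(\int_{y_t}^\infty \frac{T_0}{T}x y^{1-\beta}dy\big)-c$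 ($c$ = membership fee); a participating CP of type $y$ gets $\lambda\int_{x_t}^\infty\frac{T_0}{T}x^{1-\gamma}y\,dx-by-ay$, with $\lambda>0$ an exchange rate, $a\ge0$ the CP cost parameter, $b$ the CP fee. The function $\phi$ is a differentiable, nonnegative, increasing, concave function on $[0,\infty)$. Prices $(b,c)$ implement thresholds $(x_t,y_t)$ when exactly consumers of type $\ge x_t$ and CPs of type $\ge y_t$ have nonnegative utility; $(\widehat b_{opt},\widehat c_{opt})$ denote prices implementing the welfare-maximizing thresholds. *)

(* Defs.v *)
From Stdlib Require Import Reals.
From Coquelicot Require Import Coquelicot.
Open Scope R_scope.

Definition Iinf (f : R -> R) (a : R) : R :=
  RInt_gen f (at_point a) (Rbar_locally p_infty).

(* lowest consumer / CP types *)
Definition x0 (gam : R) : R := Rpower (1 / (gam - 1)) (1 / (gam - 1)).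
Definition y0 (bet : R) : R := Rpower (1 / (bet - 1)) (1 / (bet - 1)).

Definition IX (gam t : R) : R := Iinf (fun x => Rpower x (1 - gam)) t.
Definition IY (bet t : R) : R := Iinf (fun y => Rpower y (1 - bet)) t.

Definition Xbar (gam : R) : R := IX gam (x0 gam).
Definition Ybar (bet : R) : R := IY bet (y0 bet).
Definition T0 (gam bet : R) : R := Xbar gam * Ybar bet.

(* total traffic when types >= xt, >= yt participate *)
Definition traffic (gam bet xt yt : R) : R :=
  sqrt (T0 gam bet * IX gam xt * IY bet yt).
Definition speed (gam bet xt yt : R) : R := T0 gam bet / traffic gam bet xt yt.

(* utility of a participating consumer of type x (membership fee c) *)
Definition consumer_utility (gam bet : R) (phi : R -> R) (c xt yt x : R) : R :=
  phi (Iinf (fun y => speed gam bet xt yt * x * Rpower y (1 - bet)) yt) - c.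

(* utility of a participating CP of type y (CP fee b, cost parameter a) *)
Definition cp_utility (gam bet lam a b xt yt y : R) : R :=
  lam * Iinf (fun x => speed gam bet xt yt * Rpower x (1 - gam) * y) xt
  - b * y - a * y.

(* (b,c) implement (xt,yt): among existing types (x >= x0, y >= y0), types at or
   above the threshold get nonnegative utility (participate) and types below the
   threshold get nonpositive utility (do not strictly prefer joining). *)
Definition implements (gam bet lam a : R) (phi : R -> R) (b c xt yt : R) : Prop :=
  (forall x, x0 gam <= x ->
     (xt <= x -> 0 <= consumer_utility gam bet phi c xt yt x) /\
     (x < xt -> consumer_utility gam bet phi c xt yt x <= 0)) /\
  (forall y, y0 bet <= y ->
     (yt <= y -> 0 <= cp_utility gam bet lam a b xt yt y) /\
     (y < yt -> cp_utility gam bet lam a b xt yt y <= 0)).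

Definition welfare (gam bet lam a : R) (phi : R -> R) (xt yt : R) : R :=
  Iinf (fun x => phi (sqrt (T0 gam bet * IY bet yt) / sqrt (IX gam xt) * x)
                 * Rpower x (- gam)) xt
  + lam * sqrt (T0 gam bet) * sqrt (IX gam xt) * sqrt (IY bet yt)
  - a * IY bet yt.

Definition welfare_max (gam bet lam a : R) (phi : R -> R) (xt yt : R) : Prop :=
  x0 gam <= xt /\ y0 bet <= yt /\
  forall xt' yt', x0 gam <= xt' -> y0 bet <= yt' ->
    welfare gam bet lam a phi xt' yt' <= welfare gam bet lam a phi xt yt.

Definition a_thr (gam bet lam : R) (phi : R -> R) : R :=
  / 2 * (Iinf (fun x => Derive phi (x * Ybar bet) * Rpower x (1 - gam)) (x0 gam)
         + lam * Xbar gam).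

Definition yhat_eq (gam bet lam a : R) (phi : R -> R) (yt : R) : R :=
  a - / 2 * (Iinf (fun x => Derive phi (x * sqrt (Ybar bet * IY bet yt))
                            * Rpower x (1 - gam)) (x0 gam)
             + lam * Xbar gam) * (sqrt (Ybar bet) / sqrt (IY bet yt)).

(* Main.v *)
Require Import Defs.
From Stdlib Require Import Reals Lra FunctionalExtensionality.
From Coquelicot Require Import Coquelicot.
Open Scope R_scope.


Definition IG (f : R -> R) (a l : R) : Prop :=
  (forall b, a <= b -> ex_RInt f a b) /\
  filterlim (fun b => RInt f a b) (Rbar_locally p_infty) (locally l).

Lemma IG_Iinf f a l : IG f a l -> Iinf f a = l.
Proof.
  intros [Hex Hlim]. unfold Iinf. apply is_RInt_gen_unique.
  intros P HP. specialize (Hlim P HP). simpl in Hlim.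
  unfold filtermapi.
  destruct Hlim as [M HM].
  apply Filter_prod with (fun x => x = a) (fun b => a <= b /\ M < b).
  - reflexivity.
  - exists (Rmax a M). intros x Hx. split.
    + pose proof (Rmax_l a M); lra.
    + pose proof (Rmax_r a M); lra.
  - intros x y Hx [Hy1 Hy2]. subst x. exists (RInt f a y). split.
    + apply RInt_correct. apply Hex; auto.
    + apply HM; auto.
Qed.

Lemma RbarP (P : R -> Prop) (M : R) : (forall x, M < x -> P x) -> Rbar_locally p_infty P.
Proof. intros H. exists M. auto. Qed.

Lemma IG_ext f g a l : (forall x, a <= x -> f x = g x) -> IG f a l -> IG g a l.
Proof.
  intros Hfg [Hex Hlim]. split.
  - intros b Hb. apply ex_RInt_ext with f.
    + intros x Hx. rewrite Rmin_left in Hx by lra. rewrite Rmax_right in Hx by lra.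
      apply Hfg. lra.
    + auto.
  - eapply filterlim_ext_loc; [|exact Hlim].
    apply RbarP with a. intros b Hb. apply RInt_ext.
    intros x Hx. rewrite Rmin_left in Hx by lra. rewrite Rmax_right in Hx by lra.
    apply Hfg. lra.
Qed.


Lemma IG_plus f g a l1 l2 : IG f a l1 -> IG g a l2 -> IG (fun x => f x + g x) a (l1 + l2).
Proof.
  intros [Hex1 H1] [Hex2 H2]. split.
  - intros b Hb. apply (ex_RInt_plus f g); auto.
  - eapply filterlim_ext_loc.
    2: { apply (filterlim_comp_2 _ _ Rplus H1 H2). apply (filterlim_plus l1 l2). }
    apply RbarP with a. intros b Hb. simpl. symmetry.
    apply (RInt_plus f g); [apply Hex1|apply Hex2]; lra.
Qed.

Lemma IG_scal f a k l : IG f a l -> IG (fun x => k * f x) a (k * l).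
Proof.
  intros [Hex H]. split.
  - intros b Hb. apply (ex_RInt_scal f); auto.
  - eapply filterlim_ext_loc.
    2: { eapply filterlim_comp; [exact H|].
         apply (filterlim_scal_r k l). }
    apply RbarP with a. intros b Hb. simpl. symmetry. apply (RInt_scal f); apply Hex; lra.
Qed.

Lemma IG_le f g a l1 l2 : (forall x, a <= x -> f x <= g x) -> IG f a l1 -> IG g a l2 -> l1 <= l2.
Proof.
  intros Hfg [Hex1 H1] [Hex2 H2].
  assert (Rbar_le l1 l2).
  { apply (filterlim_le (F := Rbar_locally p_infty) (fun b => RInt f a b) (fun b => RInt g a b)); auto.
    apply RbarP with a. intros b Hb. apply RInt_le; try lra.
    - apply Hex1; lra.
    - apply Hex2; lra.
    - intros x Hx. apply Hfg. lra. }
  exact H.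
Qed.

Lemma IG_zero a : IG (fun _ => 0) a 0.
Proof.
  split.
  - intros b _. apply ex_RInt_const.
  - eapply filterlim_ext. 2: apply filterlim_const.
    intros b. simpl. rewrite RInt_const. unfold scal; simpl. unfold mult; simpl. ring.
Qed.

Lemma exR2 (f : R -> R) a b c : a <= b <= c -> ex_RInt f a c -> ex_RInt f b c.
Proof. intros. apply (@ex_RInt_Chasles_2 R_CompleteNormedModule f a b c); auto. Qed.
Lemma exR1 (f : R -> R) a b c : a <= b <= c -> ex_RInt f a c -> ex_RInt f a b.
Proof. intros. apply (@ex_RInt_Chasles_1 R_CompleteNormedModule f a b c); auto. Qed.

Lemma ball_R (x e y : R) : ball x e y <-> Rabs (y - x) < e.
Proof. reflexivity. Qed.

Lemma IG_cmp f h a L : (forall x, a <= x -> 0 <= f x <= h x) ->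
  (forall b, a <= b -> ex_RInt f a b) -> IG h a L -> exists l, IG f a l.
Proof.
  intros Hfh Hexf [Hexh Hh].
  assert (Hc := proj2 (filterlim_locally_cauchy (F := Rbar_locally p_infty) (fun b => RInt h a b))
                 (ex_intro _ L Hh)).
  destruct (proj1 (filterlim_locally_cauchy (U := R_CompleteSpace) (F := Rbar_locally p_infty) (fun b => RInt f a b)))
    as [l Hl].
  2: { exists l. split; auto. }
  intros eps. destruct (Hc eps) as [P [HP HPc]].
  exists (fun u => a <= u /\ P u). split.
  { apply filter_and; auto. apply RbarP with a. intros; lra. }
  assert (key : forall u v, a <= u <= v -> P u -> P v ->
            Rabs (RInt f a v - RInt f a u) < eps).
  { intros u v Huv Pu Pv. specialize (HPc u v Pu Pv). change (Rabs (RInt h a v - RInt h a u) < eps) in HPc.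
    assert (E1 : RInt f a v - RInt f a u = RInt f u v).
    { rewrite <- (RInt_Chasles f a u v). simpl. unfold plus; simpl. ring.
      apply Hexf; lra. apply exR2 with a; [lra|apply Hexf; lra]. }
    assert (E2 : RInt h a v - RInt h a u = RInt h u v).
    { rewrite <- (RInt_Chasles h a u v). simpl. unfold plus; simpl. ring.
      apply Hexh; lra. apply exR2 with a; [lra|apply Hexh; lra]. }
    assert (Hexfuv : ex_RInt f u v) by (apply exR2 with a; [lra|apply Hexf; lra]).
    assert (Hexhuv : ex_RInt h u v) by (apply exR2 with a; [lra|apply Hexh; lra]).
    assert (0 <= RInt f u v).
    { apply RInt_ge_0; try lra; auto. intros x Hx. apply Hfh; lra. }
    assert (RInt f u v <= RInt h u v).
    { apply RInt_le; try lra; auto. intros x Hx. apply Hfh; lra. }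
    rewrite E1. rewrite E2 in HPc.
    rewrite Rabs_pos_eq in HPc |- *; lra. }
  intros u v [Hu Pu] [Hv Pv]. change (Rabs (RInt f a v - RInt f a u) < eps).
  destruct (Rle_dec u v).
  - apply key; auto.
  - rewrite <- Rabs_Ropp. replace (- (RInt f a v - RInt f a u)) with (RInt f a u - RInt f a v) by ring.
    apply key; auto; lra.
Qed.

Lemma IG_chasles f a c l : a <= c -> IG f a l -> IG f c (l - RInt f a c).
Proof.
  intros Hac [Hex H]. split.
  - intros b Hb. apply exR2 with a; [lra|apply Hex; lra].
  - eapply filterlim_ext_loc.
    2: { apply (filterlim_comp_2 _ _ Rplus H (filterlim_const (- RInt f a c))).
         apply (filterlim_plus l (- RInt f a c)). }
    apply RbarP with c. intros b Hb. simpl.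
    rewrite <- (RInt_Chasles f a c b). simpl. unfold plus; simpl. ring.
    apply Hex; lra. apply exR2 with a; [lra|apply Hex; lra].
Qed.

Lemma lim_mul_pinfty u : 0 < u -> filterlim (fun b => u * b) (Rbar_locally p_infty) (Rbar_locally p_infty).
Proof.
  intros Hu P [M HM]. exists (M / u). intros x Hx. apply HM.
  apply Rmult_lt_compat_l with (r := u) in Hx; auto.
  replace (u * (M / u)) with M in Hx by (field; lra). exact Hx.
Qed.

Lemma IG_scale f a u l : 0 < u -> IG f (u * a) l -> IG (fun y => u * f (u * y)) a l.
Proof.
  intros Hu [Hex H].
  assert (E : forall b, a <= b -> ex_RInt f (u * a + 0) (u * b + 0)).
  { intros b Hb. rewrite !Rplus_0_r. apply Hex. apply Rmult_le_compat_l; lra. }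
  split.
  - intros b Hb. eapply ex_RInt_ext. 2: apply (ex_RInt_comp_lin f u 0 a b (E b Hb)).
    intros x _. simpl. rewrite Rplus_0_r. reflexivity.
  - eapply filterlim_ext_loc.
    2: { eapply filterlim_comp; [apply lim_mul_pinfty; exact Hu| exact H]. }
    apply RbarP with a. intros b Hb. simpl.
    rewrite <- (Rplus_0_r (u * a)), <- (Rplus_0_r (u * b)).
    rewrite <- (RInt_comp_lin f u 0 a b (E b ltac:(lra))).
    apply RInt_ext. intros x _. simpl. rewrite Rplus_0_r. reflexivity.
Qed.

Lemma Rpower_pos x y : 0 < Rpower x y.
Proof. unfold Rpower. apply exp_pos. Qed.

Lemma lim_Rpower_0 e : e < 0 -> filterlim (fun b => Rpower b e) (Rbar_locally p_infty) (locally 0).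
Proof.
  intros He. apply filterlim_locally. intros eps.
  apply RbarP with (exp (ln eps / e)). intros b Hb.
  apply ball_R. rewrite Rminus_0_r. rewrite Rabs_pos_eq by (left; apply Rpower_pos).
  assert (Hb0 : 0 < b) by (pose proof (exp_pos (ln eps / e)); lra).
  apply ln_increasing in Hb; [|apply exp_pos]. rewrite ln_exp in Hb.
  unfold Rpower. rewrite <- (exp_ln eps) by apply cond_pos.
  apply exp_increasing.
  apply Rmult_lt_compat_l with (r := - e) in Hb; [|lra].
  replace (- e * (ln eps / e)) with (- ln eps) in Hb by (field; lra). lra.
Qed.

Lemma Rpower_derive q x : 0 < x -> is_derive (fun y => Rpower y q) x (q * Rpower x (q - 1)).
Proof. intros Hx. apply is_derive_Reals. apply derivable_pt_lim_power. exact Hx. Qed.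

Lemma Rpower_cont q x : 0 < x -> continuous (fun y => Rpower y q) x.
Proof. intros Hx. apply (ex_derive_continuous (K := R_AbsRing) (V := R_NormedModule) (fun y => Rpower y q)). eexists. apply Rpower_derive. exact Hx. Qed.

Lemma IG_pow q t : q < -1 -> 0 < t -> IG (fun x => Rpower x q) t (- Rpower t (q + 1) / (q + 1)).
Proof.
  intros Hq Ht.
  assert (HR : forall b, t <= b -> is_RInt (fun x => Rpower x q) t b
                  (minus (/ (q+1) * Rpower b (q+1)) (/ (q+1) * Rpower t (q+1)))).
  { intros b Hb.
    apply (is_RInt_derive (fun x => / (q+1) * Rpower x (q+1)) (fun x => Rpower x q)).
    - intros x Hx. rewrite Rmin_left in Hx by lra.
      assert (Hx0 : 0 < x) by lra.
      apply is_derive_Reals.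
      replace (Rpower x q) with (/ (q+1) * ((q+1) * Rpower x (q+1-1))).
      + apply (derivable_pt_lim_scal (fun y => Rpower y (q+1))). apply derivable_pt_lim_power. exact Hx0.
      + replace (q+1-1) with q by ring. field. lra.
    - intros x Hx. rewrite Rmin_left in Hx by lra. apply Rpower_cont. lra. }
  split.
  - intros b Hb. eexists. apply HR. exact Hb.
  - assert (L1 : filterlim (fun b => / (q+1) * Rpower b (q+1)) (Rbar_locally p_infty) (locally (/(q+1) * 0))).
    { eapply filterlim_comp; [apply lim_Rpower_0; lra | apply (filterlim_scal_r (/ (q+1)) 0)]. }
    replace (- Rpower t (q+1)/(q+1)) with (plus (/(q+1)*0) (- (/(q+1) * Rpower t (q+1))))
      by (unfold plus; simpl; field; lra).
    eapply filterlim_ext_loc.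
    2: { apply (filterlim_comp_2 _ _ Rplus L1 (filterlim_const (- (/(q+1) * Rpower t (q+1))))).
         apply (filterlim_plus (V := R_NormedModule) _ _). }
    apply RbarP with t. intros b Hb. simpl. rewrite (is_RInt_unique _ _ _ _ (HR b ltac:(lra))).
    unfold minus, plus, opp; simpl. reflexivity.
Qed.

Lemma exp_le' x y : x <= y -> exp x <= exp y.
Proof. intros [H|H]; [left; apply exp_increasing; auto | subst; lra]. Qed.
Lemma ln_le' x y : 0 < x -> x <= y -> ln x <= ln y.
Proof. intros Hx [H|H]; [left; apply ln_increasing; auto | subst; lra]. Qed.

Lemma Rpower_le_neg a b e : 0 < a -> a <= b -> e <= 0 -> Rpower b e <= Rpower a e.
Proof.
  intros Ha Hab He. unfold Rpower. apply exp_le'.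
  pose proof (ln_le' a b Ha Hab). nra.
Qed.

Definition Good (phi : R -> R) : Prop :=
  (forall z, 0 <= z -> 0 <= phi z) /\
  (forall z w, 0 <= z -> z <= w -> phi z <= phi w) /\
  (forall z w t, 0 <= z -> 0 <= w -> 0 <= t <= 1 ->
     t * phi z + (1 - t) * phi w <= phi (t * z + (1 - t) * w)) /\
  (forall z, 0 < z -> ex_derive phi z).

Lemma Good_dpl phi z : Good phi -> 0 < z -> derivable_pt_lim phi z (Derive phi z).
Proof.
  intros (_&_&_&Hd) Hz. apply is_derive_Reals. apply Derive_correct. auto.
Qed.

Lemma supp phi z w : Good phi -> 0 < z -> 0 <= w -> phi w <= phi z + Derive phi z * (w - z).
Proof.
  intros HG Hz Hw. pose proof (Good_dpl phi z HG Hz) as HD.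
  destruct HG as (Hnn & Hmon & Hconc & Hd).
  set (l := Derive phi z) in *.
  destruct (Rtotal_order w z) as [Hwz | [Hwz | Hwz]].
  -
    destruct (Rle_dec (phi w) (phi z + l * (w - z))) as [|Hn]; [auto|exfalso].
    set (ratio := (phi w - phi z) / (w - z)).
    assert (Hr : ratio * (w - z) = phi w - phi z) by (unfold ratio; field; lra).
    assert (Heps : 0 < l - ratio).
    { apply Rnot_le_lt in Hn. assert ((l - ratio) * (z - w) > 0) by nra.
      nra. }
    destruct (HD (l - ratio) Heps) as [delta Hdel].
    assert (Hm : exists m, 0 < m /\ m <= z - w /\ m < delta).
    { exists (Rmin (delta/2) (z-w)). destruct delta as [d Hd0]; simpl.
      split; [apply Rmin_glb_lt; lra|]. split; [apply Rmin_r|].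
      pose proof (Rmin_l (d/2) (z-w)); lra. }
    destruct Hm as (m & Hm1 & Hm2 & Hm3).
    specialize (Hdel (- m) ltac:(lra) ltac:(rewrite Rabs_left; lra)).
    set (t := m / (z - w)).
    assert (Ht : 0 <= t <= 1).
    { unfold t. split.
      - apply Rmult_le_pos; [lra|]. left; apply Rinv_0_lt_compat; lra.
      - apply Rmult_le_reg_r with (z - w); [lra|]. unfold Rdiv. rewrite Rmult_assoc, Rinv_l; lra. }
    pose proof (Hconc w z t Hw ltac:(lra) Ht) as Hc.
    replace (t * w + (1 - t) * z) with (z + - m) in Hc by (unfold t; field; lra).
    set (Q := (phi (z + - m) - phi z) / - m) in *.
    assert (HQ : Q * (- m) = phi (z + - m) - phi z) by (unfold Q; field; lra).
    assert (Htr : t * (phi w - phi z) = - m * ratio) by (rewrite <- Hr; unfold t; field; lra).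
    assert (Q <= ratio) by nra.
    apply Rabs_lt_between in Hdel. lra.
  - subst. lra.
  -
    destruct (Rle_dec (phi w) (phi z + l * (w - z))) as [|Hn]; [auto|exfalso].
    set (ratio := (phi w - phi z) / (w - z)).
    assert (Hr : ratio * (w - z) = phi w - phi z) by (unfold ratio; field; lra).
    assert (Heps : 0 < ratio - l).
    { apply Rnot_le_lt in Hn. nra. }
    destruct (HD (ratio - l) Heps) as [delta Hdel].
    assert (Hm : exists m, 0 < m /\ m <= w - z /\ m < delta).
    { exists (Rmin (delta/2) (w-z)). destruct delta as [d Hd0]; simpl.
      split; [apply Rmin_glb_lt; lra|]. split; [apply Rmin_r|].
      pose proof (Rmin_l (d/2) (w-z)); lra. }
    destruct Hm as (m & Hm1 & Hm2 & Hm3).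
    specialize (Hdel m ltac:(lra) ltac:(rewrite Rabs_right; lra)).
    set (t := m / (w - z)).
    assert (Ht : 0 <= t <= 1).
    { unfold t. split.
      - apply Rmult_le_pos; [lra|]. left; apply Rinv_0_lt_compat; lra.
      - apply Rmult_le_reg_r with (w - z); [lra|]. unfold Rdiv. rewrite Rmult_assoc, Rinv_l; lra. }
    pose proof (Hconc w z t Hw ltac:(lra) Ht) as Hc.
    replace (t * w + (1 - t) * z) with (z + m) in Hc by (unfold t; field; lra).
    set (Q := (phi (z + m) - phi z) / m) in *.
    assert (HQ : Q * m = phi (z + m) - phi z) by (unfold Q; field; lra).
    assert (Htr : t * (phi w - phi z) = m * ratio) by (rewrite <- Hr; unfold t; field; lra).
    assert (Q >= ratio) by nra.
    apply Rabs_lt_between in Hdel. lra.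
Qed.

Lemma D_nonneg phi z : Good phi -> 0 < z -> 0 <= Derive phi z.
Proof.
  intros HG Hz. pose proof (supp phi z (z+1) HG Hz ltac:(lra)).
  destruct HG as (_&Hmon&_). pose proof (Hmon z (z+1) ltac:(lra) ltac:(lra)). nra.
Qed.

Lemma D_anti phi z1 z2 : Good phi -> 0 < z1 -> z1 <= z2 -> Derive phi z2 <= Derive phi z1.
Proof.
  intros HG H1 H12. pose proof (supp phi z1 z2 HG H1 ltac:(lra)).
  pose proof (supp phi z2 z1 HG ltac:(lra) ltac:(lra)).
  destruct H12 as [H12|H12]; [|subst; lra]. nra.
Qed.

Lemma phi_scale phi z T : Good phi -> 0 <= z -> 1 <= T -> phi (T * z) <= T * phi z.
Proof.
  intros HG Hz HT. destruct HG as (Hnn&_&Hconc&_).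
  pose proof (Hconc (T*z) 0 (/T) ltac:(nra) ltac:(lra)) as H.
  assert (HT1 : 0 <= / T <= 1).
  { split. left; apply Rinv_0_lt_compat; lra. rewrite <- Rinv_1. apply Rinv_le_contravar; lra. }
  specialize (H HT1).
  replace (/ T * (T * z) + (1 - / T) * 0) with z in H by (field; lra).
  pose proof (Hnn 0 ltac:(lra)) as P0.
  assert (P1 : 0 <= (1 - / T) * phi 0) by (apply Rmult_le_pos; lra).
  assert (P2 : / T * phi (T * z) <= phi z) by lra.
  apply Rmult_le_compat_l with (r := T) in P2; [|lra].
  rewrite <- Rmult_assoc, Rinv_r, Rmult_1_l in P2 by lra. exact P2.
Qed.

Lemma phi_cont phi z : Good phi -> 0 < z -> continuous phi z.
Proof.
  intros (_&_&_&Hd) Hz. apply (ex_derive_continuous (K := R_AbsRing) (V := R_NormedModule) phi). auto.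
Qed.

Lemma D_cont phi z : Good phi -> 0 < z -> continuous (Derive phi) z.
Proof.
  intros HG Hz. apply filterlim_locally. intros eps.
  pose proof (Good_dpl phi z HG Hz) as HD.
  assert (He3 : 0 < eps / 3) by (destruct eps; simpl; lra).
  destruct (HD (eps/3) He3) as [delta Hdel].
  assert (Hr : 0 < Rmin (delta/2) (z/2)) by (destruct delta; simpl; apply Rmin_glb_lt; lra).
  exists (mkposreal _ Hr). intros y Hy. change (Rabs (y - z) < Rmin (delta/2) (z/2)) in Hy.
  change (Rabs (Derive phi y - Derive phi z) < eps).
  pose proof (Rmin_l (delta/2) (z/2)). pose proof (Rmin_r (delta/2) (z/2)).
  set (h := y - z) in *. replace y with (z + h) by (unfold h; ring).
  destruct (Req_dec h 0) as [Hh0|Hh0].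
  { rewrite Hh0, Rplus_0_r, Rminus_eq_0, Rabs_R0. destruct eps; simpl; lra. }
  assert (Habs := Rabs_def2 _ _ Hy).
  pose proof (Hdel h Hh0 ltac:(lra)) as Q1.
  pose proof (Hdel (2*h) ltac:(lra) ltac:(rewrite Rabs_mult, Rabs_pos_eq by lra; lra)) as Q2.
  apply Rabs_lt_between in Q1. apply Rabs_lt_between in Q2.
  set (l := Derive phi z) in *.
  pose proof (supp phi (z+h) z HG ltac:(lra) ltac:(lra)) as S1.
  pose proof (supp phi (z+h) (z+2*h) HG ltac:(lra) ltac:(lra)) as S2.
  set (Dh := Derive phi (z+h)) in *.
  set (A := (phi (z + h) - phi z) / h) in *.
  set (B := (phi (z + 2*h) - phi z) / (2*h)) in *.
  assert (EA : A * h = phi (z + h) - phi z) by (unfold A; field; lra).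
  assert (EB : B * (2*h) = phi (z + 2*h) - phi z) by (unfold B; field; lra).
  apply Rabs_lt_between.
  destruct (Rlt_dec 0 h).
  - assert (Dh <= A) by nra. assert (2*B - A <= Dh) by nra. lra.
  - assert (Dh >= A) by nra. assert (2*B - A >= Dh) by nra. lra.
Qed.


Lemma x0_pos g : 0 < x0 g.
Proof. apply Rpower_pos. Qed.
Lemma y0_pos b : 0 < y0 b.
Proof. apply Rpower_pos. Qed.

Lemma IG_X g t : 2 < g -> 0 < t -> IG (fun x => Rpower x (1 - g)) t (Rpower t (2 - g) / (g - 2)).
Proof.
  intros Hg Ht. pose proof (IG_pow (1 - g) t ltac:(lra) Ht) as H.
  replace (1 - g + 1) with (2 - g) in H by ring.
  replace (Rpower t (2 - g) / (g - 2)) with (- Rpower t (2 - g) / (2 - g)) by (field; lra).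
  exact H.
Qed.

Lemma IG_mg g t : 2 < g -> 0 < t -> IG (fun x => Rpower x (- g)) t (Rpower t (1 - g) / (g - 1)).
Proof.
  intros Hg Ht. pose proof (IG_pow (- g) t ltac:(lra) Ht) as H.
  replace (- g + 1) with (1 - g) in H by ring.
  replace (Rpower t (1 - g) / (g - 1)) with (- Rpower t (1 - g) / (1 - g)) by (field; lra).
  exact H.
Qed.

Lemma IX_val g t : 2 < g -> 0 < t -> IX g t = Rpower t (2 - g) / (g - 2).
Proof. intros. apply IG_Iinf. apply IG_X; auto. Qed.
Lemma IY_val b t : 2 < b -> 0 < t -> IY b t = Rpower t (2 - b) / (b - 2).
Proof. intros. apply IG_Iinf. apply IG_X; auto. Qed.

Lemma Xbar_val g : 2 < g -> Xbar g = Rpower (x0 g) (2 - g) / (g - 2).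
Proof. intros. unfold Xbar. exact (IX_val g (x0 g) H (x0_pos g)). Qed.
Lemma Ybar_val b : 2 < b -> Ybar b = Rpower (y0 b) (2 - b) / (b - 2).
Proof. intros. unfold Ybar. exact (IY_val b (y0 b) H (y0_pos b)). Qed.

Lemma IX_pos g t : 2 < g -> 0 < t -> 0 < IX g t.
Proof. intros. rewrite IX_val; auto. apply Rdiv_lt_0_compat; [apply Rpower_pos|lra]. Qed.
Lemma IY_pos b t : 2 < b -> 0 < t -> 0 < IY b t.
Proof. intros. rewrite IY_val; auto. apply Rdiv_lt_0_compat; [apply Rpower_pos|lra]. Qed.

Lemma Xbar_pos g : 2 < g -> 0 < Xbar g.
Proof. intros. exact (IX_pos g (x0 g) H (x0_pos g)). Qed.
Lemma Ybar_pos b : 2 < b -> 0 < Ybar b.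
Proof. intros. exact (IY_pos b (y0 b) H (y0_pos b)). Qed.

Lemma IX_le g t : 2 < g -> x0 g <= t -> IX g t <= Xbar g.
Proof.
  intros Hg Ht. pose proof (x0_pos g). rewrite Xbar_val, IX_val by (auto; lra).
  apply Rmult_le_compat_r. left; apply Rinv_0_lt_compat; lra.
  apply Rpower_le_neg; lra.
Qed.
Lemma IY_le b t : 2 < b -> y0 b <= t -> IY b t <= Ybar b.
Proof.
  intros Hg Ht. pose proof (y0_pos b). rewrite Ybar_val, IY_val by (auto; lra).
  apply Rmult_le_compat_r. left; apply Rinv_0_lt_compat; lra.
  apply Rpower_le_neg; lra.
Qed.

Lemma Rpower_1mg x g : 0 < x -> Rpower x (1 - g) = x * Rpower x (- g).
Proof. intros Hx. replace (1 - g) with (1 + - g) by ring. rewrite Rpower_plus, Rpower_1; auto. Qed.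


Lemma cont_mult (f g : R -> R) x : continuous f x -> continuous g x -> continuous (fun y => f y * g y) x.
Proof. intros. apply (continuous_mult (K := R_AbsRing) f g x); auto. Qed.
Lemma cont_lin k x : continuous (fun y : R => k * y) x.
Proof. apply (cont_mult (fun _ => k) (fun y => y)). apply continuous_const. apply continuous_id. Qed.
Lemma cont_comp (f g : R -> R) x : continuous f x -> continuous g (f x) -> continuous (fun y => g (f y)) x.
Proof. intros. apply (continuous_comp f g x); auto. Qed.

Lemma ex_RInt_cont (f : R -> R) a b : a <= b -> (forall x, a <= x <= b -> continuous f x) -> ex_RInt f a b.
Proof.
  intros Hab H. apply (ex_RInt_continuous (V := R_CompleteNormedModule)).
  intros z Hz. rewrite Rmin_left, Rmax_right in Hz by lra. apply H; lra.
Qed.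

Lemma IG_F phi g k t : Good phi -> 2 < g -> 0 < k -> 0 < t ->
  exists l, IG (fun x => phi (k * x) * Rpower x (- g)) t l.
Proof.
  intros HG Hg Hk Ht.
  pose proof (IG_plus _ _ _ _ _ (IG_scal _ _ (phi (k * t)) _ (IG_mg g t Hg Ht))
                (IG_scal _ _ (Derive phi (k * t) * k) _ (IG_X g t Hg Ht))) as Hh.
  eapply IG_cmp. 3: exact Hh.
  - intros x Hx. pose proof (Rpower_pos x (- g)) as P.
    assert (Hx0 : 0 < x) by lra.
    pose proof HG as (Hnn&Hmon&_).
    split.
    + apply Rmult_le_pos; [apply Hnn; apply Rmult_le_pos; lra | lra].
    + assert (Hkt : 0 < k * t) by (apply Rmult_lt_0_compat; lra).
      assert (Hkx : 0 <= k * x) by (apply Rmult_le_pos; lra).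
      pose proof (supp phi (k*t) (k*x) HG Hkt Hkx) as S.
      pose proof (D_nonneg phi (k*t) HG Hkt) as Dn.
      rewrite (Rpower_1mg x g Hx0).
      assert (phi (k * x) <= phi (k * t) + Derive phi (k * t) * k * x) by nra.
      nra.
  - intros b Hb. apply ex_RInt_cont; auto. intros x Hx.
    apply cont_mult.
    + apply (cont_comp (fun y => k * y) phi). apply cont_lin. apply phi_cont; auto. nra.
    + apply Rpower_cont. lra.
Qed.

Lemma IG_Jl phi g m t : Good phi -> 2 < g -> 0 < m -> 0 < t ->
  exists l, IG (fun x => Derive phi (x * m) * Rpower x (1 - g)) t l.
Proof.
  intros HG Hg Hm Ht.
  pose proof (IG_scal _ _ (Derive phi (t * m)) _ (IG_X g t Hg Ht)) as Hh.
  eapply IG_cmp. 3: exact Hh.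
  - intros x Hx. pose proof (Rpower_pos x (1 - g)) as P.
    split.
    + apply Rmult_le_pos; [apply D_nonneg; auto; nra | lra].
    + apply Rmult_le_compat_r; [lra|]. apply D_anti; auto; nra.
  - intros b Hb. apply ex_RInt_cont; auto. intros x Hx.
    apply cont_mult.
    + apply (cont_comp (fun y => y * m) (Derive phi)).
      * eapply continuous_ext. 2: apply (cont_lin m x). intros; simpl; ring.
      * apply D_cont; auto. nra.
    + apply Rpower_cont. lra.
Qed.

Definition Fv phi g m := Iinf (fun x => phi (m * x) * Rpower x (- g)) (x0 g).
Definition Jv phi g m := Iinf (fun x => Derive phi (x * m) * Rpower x (1 - g)) (x0 g).

Lemma J_nonneg phi g m : Good phi -> 2 < g -> 0 < m -> 0 <= Jv phi g m.
Proof.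
  intros HG Hg Hm. pose proof (x0_pos g).
  destruct (IG_Jl phi g m (x0 g) HG Hg Hm H) as [l Hl]. unfold Jv. rewrite (IG_Iinf _ _ _ Hl).
  eapply IG_le. 2: apply IG_zero. 2: exact Hl.
  intros x Hx. apply Rmult_le_pos. apply D_nonneg; auto; nra. left; apply Rpower_pos.
Qed.

Lemma J_anti phi g m1 m2 : Good phi -> 2 < g -> 0 < m1 -> m1 <= m2 -> Jv phi g m2 <= Jv phi g m1.
Proof.
  intros HG Hg Hm H12. pose proof (x0_pos g).
  destruct (IG_Jl phi g m1 (x0 g) HG Hg Hm H) as [l1 Hl1].
  destruct (IG_Jl phi g m2 (x0 g) HG Hg ltac:(lra) H) as [l2 Hl2].
  unfold Jv. rewrite (IG_Iinf _ _ _ Hl1), (IG_Iinf _ _ _ Hl2).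
  eapply IG_le. 2: exact Hl2. 2: exact Hl1.
  intros x Hx. apply Rmult_le_compat_r. left; apply Rpower_pos. apply D_anti; auto; nra.
Qed.

Lemma step2 phi g m ms : Good phi -> 2 < g -> 0 < m -> 0 < ms ->
  Fv phi g m <= Fv phi g ms + (m - ms) * Jv phi g ms.
Proof.
  intros HG Hg Hm Hms. pose proof (x0_pos g) as Hx0.
  destruct (IG_F phi g m (x0 g) HG Hg Hm Hx0) as [l1 H1].
  destruct (IG_F phi g ms (x0 g) HG Hg Hms Hx0) as [l2 H2].
  destruct (IG_Jl phi g ms (x0 g) HG Hg Hms Hx0) as [l3 H3].
  unfold Fv, Jv. rewrite (IG_Iinf _ _ _ H1), (IG_Iinf _ _ _ H2), (IG_Iinf _ _ _ H3).
  eapply IG_le. 2: exact H1. 2: exact (IG_plus _ _ _ _ _ H2 (IG_scal _ _ (m - ms) _ H3)).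
  intros x Hx. simpl.
  assert (Hxp : 0 < x) by lra.
  pose proof (supp phi (ms * x) (m * x) HG ltac:(nra) ltac:(nra)) as S.
  rewrite (Rpower_1mg x g Hxp).
  pose proof (Rpower_pos x (- g)) as P.
  replace (x * ms) with (ms * x) by ring.
  nra.
Qed.


Lemma step1 phi g k k' xt c T : Good phi -> 2 < g -> 0 < k -> 0 < k' -> 1 <= c ->
  xt = c * x0 g -> k * c = k' * T -> 1 <= T -> Rpower c (1 - g) * T <= 1 ->
  Iinf (fun x => phi (k * x) * Rpower x (- g)) xt <= Fv phi g k'.
Proof.
  intros HG Hg Hk Hk' Hc Hxt HkT HT HcT.
  pose proof (x0_pos g) as Hx0.
  assert (Hxt0 : 0 < xt) by (subst; nra).
  destruct (IG_F phi g k xt HG Hg Hk Hxt0) as [l1 H1].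
  destruct (IG_F phi g k' (x0 g) HG Hg Hk' Hx0) as [l2 H2].
  unfold Fv. rewrite (IG_Iinf _ _ _ H1), (IG_Iinf _ _ _ H2).
  rewrite Hxt in H1. apply IG_scale in H1; [|lra].
  eapply IG_le. 2: exact H1. 2: exact H2.
  intros y Hy. simpl. assert (Hy0 : 0 < y) by lra.
  replace (k * (c * y)) with (T * (k' * y)) by nra.
  rewrite <- (Rpower_mult_distr c y (- g)) by lra.
  assert (Hky : 0 <= k' * y) by (apply Rmult_le_pos; lra).
  assert (HTky : 0 <= T * (k' * y)) by (apply Rmult_le_pos; lra).
  pose proof (phi_scale phi (k' * y) T HG Hky HT) as PS.
  pose proof (Rpower_1mg c g ltac:(lra)) as E.
  pose proof (Rpower_pos c (1 - g)). pose proof (Rpower_pos y (- g)).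
  destruct HG as (Hnn&_).
  pose proof (Hnn (k' * y) Hky) as Pn.
  pose proof (Hnn (T * (k' * y)) HTky) as Pn2.
  set (A := phi (T * (k' * y))) in *. set (B := phi (k' * y)) in *.
  set (C := Rpower c (1 - g)) in *. set (Y := Rpower y (- g)) in *.
  replace (c * (A * (Rpower c (- g) * Y))) with (C * A * Y) by (rewrite E; ring).
  assert (C * A <= C * (T * B)) by (apply Rmult_le_compat_l; lra).
  assert (C * (T * B) <= B) by nra.
  nra.
Qed.

Definition Kf phi g t := Iinf (fun w => Derive phi w * Rpower w (1 - g)) t.

Lemma IG_K phi g t : Good phi -> 2 < g -> 0 < t ->
  exists l, IG (fun w => Derive phi w * Rpower w (1 - g)) t l.
Proof.
  intros HG Hg Ht. destruct (IG_Jl phi g 1 t HG Hg ltac:(lra) Ht) as [l Hl].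
  exists l. eapply IG_ext. 2: exact Hl. intros x _. cbv beta. rewrite Rmult_1_r. reflexivity.
Qed.

Lemma J_K phi g m : Good phi -> 2 < g -> 0 < m -> Jv phi g m = Rpower m (g - 2) * Kf phi g (m * x0 g).
Proof.
  intros HG Hg Hm. pose proof (x0_pos g) as Hx0.
  destruct (IG_K phi g (m * x0 g) HG Hg ltac:(nra)) as [l Hl].
  unfold Kf. rewrite (IG_Iinf _ _ _ Hl).
  apply IG_scale in Hl; [|lra].
  apply (IG_scal _ _ (Rpower m (g - 2))) in Hl.
  unfold Jv. apply IG_Iinf. eapply IG_ext. 2: exact Hl.
  intros y Hy. simpl. assert (Hy0 : 0 < y) by lra.
  rewrite <- (Rpower_mult_distr m y (1 - g)) by lra.
  replace (m * y) with (y * m) by ring.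
  assert (E : Rpower m (g - 2) * m * Rpower m (1 - g) = 1).
  { rewrite <- (Rpower_1 m) at 2 by lra. rewrite <- !Rpower_plus.
    replace (g - 2 + 1 + (1 - g)) with 0 by ring. apply Rpower_O. lra. }
  transitivity ((Rpower m (g - 2) * m * Rpower m (1 - g)) * (Derive phi (y * m) * Rpower y (1 - g))).
  ring. rewrite E. ring.
Qed.

Lemma K_cont phi g t1 : Good phi -> 2 < g -> 0 < t1 -> continuous (Kf phi g) t1.
Proof.
  intros HG Hg Ht1.
  set (f := fun w => Derive phi w * Rpower w (1 - g)).
  assert (Hfc : forall w, 0 < w -> continuous f w).
  { intros w Hw. apply cont_mult. apply D_cont; auto. apply Rpower_cont; auto. }
  set (c := t1 / 2).
  destruct (IG_K phi g c HG Hg ltac:(unfold c; lra)) as [l0 H0].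
  assert (Hr : 0 < t1 / 2) by lra.
  apply continuous_ext_loc with (fun t => l0 - RInt f c t).
  - exists (mkposreal _ Hr). intros y Hy. change (Rabs (y - t1) < t1/2) in Hy.
    apply Rabs_def2 in Hy.
    unfold Kf. symmetry. apply IG_Iinf. apply IG_chasles; auto. unfold c; lra.
  - apply (cont_comp (fun t => RInt f c t) (fun u => l0 - u)).
    + apply (continuous_RInt_1 f c t1 (fun t => RInt f c t)).
      exists (mkposreal _ Hr). intros y Hy. change (Rabs (y - t1) < t1/2) in Hy.
      apply Rabs_def2 in Hy. apply (RInt_correct (V := R_CompleteNormedModule)). apply ex_RInt_cont. unfold c; lra.
      intros x Hx. apply Hfc. unfold c in Hx; lra.
    + apply (ex_derive_continuous (K := R_AbsRing) (V := R_NormedModule) (fun u => l0 - u)).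
      auto_derive. auto.
Qed.

Lemma J_cont phi g m : Good phi -> 2 < g -> 0 < m -> continuous (Jv phi g) m.
Proof.
  intros HG Hg Hm. pose proof (x0_pos g) as Hx0.
  assert (Hr : 0 < m / 2) by lra.
  apply continuous_ext_loc with (fun m => Rpower m (g - 2) * Kf phi g (m * x0 g)).
  - exists (mkposreal _ Hr). intros y Hy. change (Rabs (y - m) < m/2) in Hy.
    apply Rabs_def2 in Hy. symmetry. apply J_K; auto. lra.
  - apply cont_mult. apply Rpower_cont; auto.
    apply (cont_comp (fun m => m * x0 g) (Kf phi g)).
    + eapply continuous_ext. 2: apply (cont_lin (x0 g) m). intros; simpl; ring.
    + apply K_cont; auto. nra.
Qed.


Lemma Iinf_cp g s y t : 2 < g -> 0 < t ->
  Iinf (fun x => s * Rpower x (1 - g) * y) t = s * y * IX g t.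
Proof.
  intros Hg Ht. rewrite (IX_val g t Hg Ht). apply IG_Iinf.
  eapply IG_ext. 2: exact (IG_scal _ _ (s * y) _ (IG_X g t Hg Ht)).
  intros; simpl; ring.
Qed.

Lemma Iinf_cons b s x t : 2 < b -> 0 < t ->
  Iinf (fun y => s * x * Rpower y (1 - b)) t = s * x * IY b t.
Proof.
  intros Hb Ht. rewrite (IY_val b t Hb Ht). apply IG_Iinf.
  eapply IG_ext. 2: exact (IG_scal _ _ (s * x) _ (IG_X b t Hb Ht)).
  intros; simpl; ring.
Qed.

Lemma speed_x0 g b y : 2 < g -> 2 < b -> y0 b <= y ->
  speed g b (x0 g) y = Ybar b / sqrt (Ybar b * IY b y).
Proof.
  intros Hg Hb Hy. pose proof (Xbar_pos g Hg). pose proof (Ybar_pos b Hb).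
  pose proof (IY_pos b y Hb ltac:(pose proof (y0_pos b); lra)).
  unfold speed, traffic, T0. change (IX g (x0 g)) with (Xbar g).
  replace (Xbar g * Ybar b * Xbar g * IY b y) with ((Xbar g * Xbar g) * (Ybar b * IY b y)) by ring.
  rewrite sqrt_mult by nra. rewrite sqrt_square by lra.
  field. split. apply Rgt_not_eq. apply sqrt_lt_R0. nra. lra.
Qed.

Lemma welfare_x0 g b lam a phi y : 2 < g -> 2 < b -> y0 b <= y ->
  welfare g b lam a phi (x0 g) y =
  Fv phi g (sqrt (Ybar b * IY b y)) + lam * Xbar g * sqrt (Ybar b * IY b y) - a * IY b y.
Proof.
  intros Hg Hb Hy. pose proof (Xbar_pos g Hg). pose proof (Ybar_pos b Hb).
  pose proof (IY_pos b y Hb ltac:(pose proof (y0_pos b); lra)).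
  unfold welfare, T0. change (IX g (x0 g)) with (Xbar g).
  assert (E : sqrt (Xbar g * Ybar b * IY b y) / sqrt (Xbar g) = sqrt (Ybar b * IY b y)).
  { rewrite Rmult_assoc, sqrt_mult by nra. field. apply Rgt_not_eq. apply sqrt_lt_R0. lra. }
  rewrite E. unfold Fv. f_equal. f_equal.
  rewrite (sqrt_mult (Xbar g) (Ybar b)) by lra. rewrite (sqrt_mult (Ybar b) (IY b y)) by lra.
  pose proof (sqrt_sqrt (Xbar g) ltac:(lra)). nra.
Qed.


Lemma sq_inj x y : 0 <= x -> 0 <= y -> x * x = y * y -> x = y.
Proof. intros. nra. Qed.

Lemma welfare_bound g b lam a phi xt y : Good phi -> 2 < g -> 2 < b -> 0 < lam ->
  x0 g <= xt -> y0 b <= y ->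
  welfare g b lam a phi xt y <= welfare g b lam a phi (x0 g) y.
Proof.
  intros HG Hg Hb Hlam Hx Hy.
  pose proof (Xbar_pos g Hg) as HX. pose proof (Ybar_pos b Hb) as HY.
  pose proof (x0_pos g) as Hx0.
  pose proof (IY_pos b y Hb ltac:(pose proof (y0_pos b); lra)) as HV.
  pose proof (IX_pos g xt Hg ltac:(lra)) as HIX.
  pose proof (IX_le g xt Hg Hx) as HIXle.
  rewrite welfare_x0 by auto. unfold welfare.
  set (V := IY b y) in *.
  set (k := sqrt (T0 g b * V) / sqrt (IX g xt)).
  set (k' := sqrt (Ybar b * V)).
  set (c := xt / x0 g).
  set (T := Rpower c (g / 2)).
  assert (Hc : 1 <= c).
  { unfold c. apply Rmult_le_reg_r with (x0 g); auto. unfold Rdiv. rewrite Rmult_assoc, Rinv_l; lra. }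
  assert (HT0 : 0 < T0 g b) by (unfold T0; nra).
  assert (Hk : 0 < k) by (unfold k; apply Rdiv_lt_0_compat; apply sqrt_lt_R0; nra).
  assert (Hk' : 0 < k') by (unfold k'; apply sqrt_lt_R0; nra).
  assert (Hxt : xt = c * x0 g) by (unfold c; field; lra).
  assert (HIXc : IX g xt = Rpower c (2 - g) * Xbar g).
  { rewrite IX_val, Xbar_val by (auto; lra). rewrite Hxt.
    rewrite <- Rpower_mult_distr by lra. field. lra. }
  assert (Hcc : Rpower c g * Rpower c (2 - g) = c * c).
  { rewrite <- Rpower_plus. replace (g + (2 - g)) with (1 + 1) by ring.
    rewrite Rpower_plus, Rpower_1 by lra. reflexivity. }
  assert (HTT : T * T = Rpower c g).
  { unfold T. rewrite <- Rpower_plus. f_equal. field. }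
  assert (Hkk : k * k = T0 g b * V / IX g xt).
  { unfold k. pose proof (sqrt_lt_R0 _ HIX).
    replace (sqrt (T0 g b * V) / sqrt (IX g xt) * (sqrt (T0 g b * V) / sqrt (IX g xt)))
      with ((sqrt (T0 g b * V) * sqrt (T0 g b * V)) / (sqrt (IX g xt) * sqrt (IX g xt))) by (field; lra).
    rewrite !sqrt_sqrt by nra. reflexivity. }
  assert (Hkk' : k' * k' = Ybar b * V) by (unfold k'; apply sqrt_sqrt; nra).
  assert (HTpos : 0 < T) by apply Rpower_pos.
  assert (HPpos : 0 < Rpower c (2 - g)) by apply Rpower_pos.
  assert (HkT : k * c = k' * T).
  { apply sq_inj; try nra.
    replace (k * c * (k * c)) with ((k * k) * (c * c)) by ring.
    replace (k' * T * (k' * T)) with ((k' * k') * (T * T)) by ring.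
    rewrite Hkk, Hkk', HTT, HIXc, <- Hcc. unfold T0. field. lra. }
  assert (HT1 : 1 <= T).
  { unfold T. rewrite <- (Rpower_O c) at 1 by lra. apply Rle_Rpower; lra. }
  assert (HcT : Rpower c (1 - g) * T <= 1).
  { unfold T. rewrite <- Rpower_plus. apply Rle_trans with (Rpower c 0).
    apply Rle_Rpower; lra. rewrite Rpower_O; lra. }
  pose proof (step1 phi g k k' xt c T HG Hg Hk Hk' Hc Hxt HkT HT1 HcT) as S1.
  assert (S2 : lam * sqrt (T0 g b) * sqrt (IX g xt) * sqrt V <= lam * Xbar g * k').
  { unfold k', T0. rewrite (sqrt_mult (Xbar g) (Ybar b)) by lra. rewrite (sqrt_mult (Ybar b) V) by lra.
    pose proof (sqrt_sqrt (Xbar g) ltac:(lra)).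
    pose proof (sqrt_le_1_alt _ _ HIXle).
    pose proof (sqrt_pos (Ybar b)). pose proof (sqrt_pos V). pose proof (sqrt_pos (Xbar g)).
    pose proof (sqrt_pos (IX g xt)).
    assert (HQ : 0 <= lam * sqrt (Ybar b) * sqrt V * sqrt (Xbar g)) by (repeat apply Rmult_le_pos; lra).
    apply Rle_trans with (lam * sqrt (Ybar b) * sqrt V * sqrt (Xbar g) * sqrt (IX g xt)). right; ring.
    apply Rle_trans with (lam * sqrt (Ybar b) * sqrt V * sqrt (Xbar g) * sqrt (Xbar g)).
    apply Rmult_le_compat_l; auto.
    rewrite Rmult_assoc, H. right; ring. }
  lra.
Qed.


Lemma G_opt1 phi g lam a X Y m : Good phi -> 2 < g -> 0 < Y -> 0 < m -> m <= Y -> 0 <= a ->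
  a <= / 2 * (Jv phi g Y + lam * X) ->
  Fv phi g m + lam * X * m - a * (m * m / Y) <= Fv phi g Y + lam * X * Y - a * (Y * Y / Y).
Proof.
  intros HG Hg HY Hm HmY Ha Hthr.
  pose proof (step2 phi g m Y HG Hg Hm HY) as S.
  assert (H1 : (m - Y) * (Jv phi g Y + lam * X) <= (m - Y) * (2 * a)).
  { apply Rmult_le_compat_neg_l; lra. }
  assert (H2 : (m - Y) * (2 * a) - a * (m * m / Y) + a * (Y * Y / Y) = a * (m - Y) * (Y - m) / Y)
    by (field; lra).
  assert (H3 : a * (m - Y) * (Y - m) / Y <= 0).
  { unfold Rdiv. apply Rmult_le_0_r. 2: left; apply Rinv_0_lt_compat; lra.
    assert (0 <= a * (Y - m) * (Y - m)) by (apply Rmult_le_pos; [apply Rmult_le_pos|]; lra).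
    nra. }
  lra.
Qed.

Lemma G_opt2 phi g lam a X Y m ms : Good phi -> 2 < g -> 0 < Y -> 0 < m -> 0 < ms -> 0 <= a ->
  Jv phi g ms + lam * X = 2 * a * ms / Y ->
  Fv phi g m + lam * X * m - a * (m * m / Y) <= Fv phi g ms + lam * X * ms - a * (ms * ms / Y).
Proof.
  intros HG Hg HY Hm Hms Ha HJ.
  pose proof (step2 phi g m ms HG Hg Hm Hms) as S.
  assert (H1 : (m - ms) * (Jv phi g ms + lam * X) - a * (m * m / Y) + a * (ms * ms / Y)
               = - (a * (m - ms) * (m - ms) / Y)).
  { rewrite HJ. field. lra. }
  assert (H3 : 0 <= a * (m - ms) * (m - ms) / Y).
  { unfold Rdiv. apply Rmult_le_pos. 2: left; apply Rinv_0_lt_compat; lra.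
    rewrite Rmult_assoc. apply Rmult_le_pos; [lra|]. pose proof (Rle_0_sqr (m - ms)). unfold Rsqr in *. lra. }
  lra.
Qed.

Definition Phi g b lam a phi V :=
  a - / 2 * (Jv phi g (sqrt (Ybar b * V)) + lam * Xbar g) * (sqrt (Ybar b) / sqrt V).

Lemma Phi_cont g b lam a phi V : Good phi -> 2 < g -> 2 < b -> 0 < V -> continuity_pt (Phi g b lam a phi) V.
Proof.
  intros HG Hg Hb HV. pose proof (Ybar_pos b Hb) as HY.
  apply continuity_pt_filterlim. unfold Phi.
  apply (cont_comp (fun V => / 2 * (Jv phi g (sqrt (Ybar b * V)) + lam * Xbar g) * (sqrt (Ybar b) / sqrt V))
           (fun u => a - u)
        ).
  2: { apply (ex_derive_continuous (K := R_AbsRing) (V := R_NormedModule) (fun u => a - u)).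
       auto_derive. auto. }
  apply cont_mult.
  - apply (cont_comp (fun V => Jv phi g (sqrt (Ybar b * V))) (fun u => / 2 * (u + lam * Xbar g))).
    + apply (cont_comp (fun V => sqrt (Ybar b * V)) (Jv phi g)).
      * apply continuous_sqrt_comp. apply cont_lin.
      * apply J_cont; auto. apply sqrt_lt_R0. apply Rmult_lt_0_compat; lra.
    + apply (ex_derive_continuous (K := R_AbsRing) (V := R_NormedModule) (fun u => / 2 * (u + lam * Xbar g))).
      auto_derive. auto.
  - apply (cont_comp sqrt (fun u => sqrt (Ybar b) / u)).
    + apply continuous_sqrt.
    + apply (ex_derive_continuous (K := R_AbsRing) (V := R_NormedModule) (fun u => sqrt (Ybar b) / u)).
      auto_derive. apply Rgt_not_eq. apply sqrt_lt_R0. auto.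
Qed.

Lemma Phi_strict g b lam a phi V1 V2 : Good phi -> 2 < g -> 2 < b -> 0 < lam -> 0 < V1 -> V1 < V2 ->
  Phi g b lam a phi V1 < Phi g b lam a phi V2.
Proof.
  intros HG Hg Hb Hlam HV1 H12. pose proof (Ybar_pos b Hb) as HY. pose proof (Xbar_pos g Hg) as HX.
  unfold Phi.
  assert (Hm1 : 0 < sqrt (Ybar b * V1)) by (apply sqrt_lt_R0; apply Rmult_lt_0_compat; lra).
  assert (Hm12 : sqrt (Ybar b * V1) <= sqrt (Ybar b * V2)) by (apply sqrt_le_1_alt; apply Rmult_le_compat_l; lra).
  pose proof (J_anti phi g _ _ HG Hg Hm1 Hm12) as HJ.
  pose proof (J_nonneg phi g (sqrt (Ybar b * V2)) HG Hg ltac:(lra)) as HJ2.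
  assert (Hs : sqrt V1 < sqrt V2) by (apply sqrt_lt_1_alt; lra).
  pose proof (sqrt_lt_R0 V1 HV1). pose proof (sqrt_lt_R0 _ HY).
  assert (Hr : sqrt (Ybar b) / sqrt V2 < sqrt (Ybar b) / sqrt V1).
  { unfold Rdiv. apply Rmult_lt_compat_l; auto. apply Rinv_lt_contravar; nra. }
  assert (Hr2 : 0 < sqrt (Ybar b) / sqrt V2) by (apply Rdiv_lt_0_compat; lra).
  assert (0 < lam * Xbar g) by nra.
  nra.
Qed.


Lemma wmax_of g b lam a phi ys : Good phi -> 2 < g -> 2 < b -> 0 < lam -> y0 b <= ys ->
  (forall y, y0 b <= y -> welfare g b lam a phi (x0 g) y <= welfare g b lam a phi (x0 g) ys) ->
  welfare_max g b lam a phi (x0 g) ys.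
Proof.
  intros HG Hg Hb Hlam Hys H. split; [lra|]. split; [auto|].
  intros xt yt Hxt Hyt. eapply Rle_trans. apply welfare_bound; eauto. auto.
Qed.

Lemma welfare_G g b lam a phi y : 2 < g -> 2 < b -> y0 b <= y ->
  welfare g b lam a phi (x0 g) y =
  Fv phi g (sqrt (Ybar b * IY b y)) + lam * Xbar g * sqrt (Ybar b * IY b y)
   - a * (sqrt (Ybar b * IY b y) * sqrt (Ybar b * IY b y) / Ybar b).
Proof.
  intros Hg Hb Hy. rewrite welfare_x0 by auto. pose proof (Ybar_pos b Hb).
  pose proof (IY_pos b y Hb ltac:(pose proof (y0_pos b); lra)).
  rewrite sqrt_sqrt by nra. f_equal. field. lra.
Qed.

Lemma cp_val g b lam a b' yt y : 2 < g -> 2 < b -> y0 b <= yt ->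
  cp_utility g b lam a b' (x0 g) yt y = y * (lam * speed g b (x0 g) yt * Xbar g - b' - a).
Proof.
  intros Hg Hb Hy. unfold cp_utility. rewrite Iinf_cp by (auto; apply x0_pos).
  change (IX g (x0 g)) with (Xbar g). ring.
Qed.

Lemma cons_val g b phi c yt x : 2 < g -> 2 < b -> y0 b <= yt ->
  consumer_utility g b phi c (x0 g) yt x = phi (speed g b (x0 g) yt * x * IY b yt) - c.
Proof.
  intros Hg Hb Hy. unfold consumer_utility. rewrite Iinf_cons; auto.
  pose proof (y0_pos b); lra.
Qed.


Theorem theorem3 (gam bet lam a : R) (phi : R -> R) :
  2 < gam -> 2 < bet -> 0 < lam -> 0 <= a ->
  (forall z, 0 <= z -> 0 <= phi z) ->
  (forall z w, 0 <= z -> z <= w -> phi z <= phi w) ->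
  (forall z w t, 0 <= z -> 0 <= w -> 0 <= t <= 1 ->
     t * phi z + (1 - t) * phi w <= phi (t * z + (1 - t) * w)) ->
  (forall z, 0 < z -> ex_derive phi z) ->
  (exists l, filterlim (fun h => (phi h - phi 0) / h) (at_right 0) (locally l)) ->
  (a <= a_thr gam bet lam phi ->
     welfare_max gam bet lam a phi (x0 gam) (y0 bet) /\
     forall b c, implements gam bet lam a phi b c (x0 gam) (y0 bet) ->
       b <= lam / (gam - 2) * Rpower (x0 gam) (2 - gam) - a /\
       c <= phi (1 / (bet - 2) * Rpower (y0 bet) (2 - bet) * x0 gam)) /\
  (a_thr gam bet lam phi < a ->
     exists yh, y0 bet <= yh /\ yhat_eq gam bet lam a phi yh = 0 /\
       (forall y, y0 bet <= y -> yhat_eq gam bet lam a phi y = 0 -> y = yh) /\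
       welfare_max gam bet lam a phi (x0 gam) yh /\
       forall b c, implements gam bet lam a phi b c (x0 gam) yh ->
         b = (2 * lam /
               (/ Xbar gam *
                  Iinf (fun x => Derive phi
                          (sqrt (Ybar bet * (1 / (bet - 2) * Rpower yh (2 - bet))) * x)
                        * Rpower x (1 - gam)) (x0 gam)
                + lam) - 1) * a /\
         c <= phi (sqrt (Ybar bet * (1 / (bet - 2) * Rpower yh (2 - bet))) * x0 gam)).
Proof.
  intros Hg Hb Hlam Ha Hnn Hmon Hconc Hder _.
  assert (HG : Good phi) by (repeat split; auto).
  pose proof (Xbar_pos gam Hg) as HX. pose proof (Ybar_pos bet Hb) as HY.
  pose proof (x0_pos gam) as Hx0. pose proof (y0_pos bet) as Hy0.
  assert (HYY : sqrt (Ybar bet * Ybar bet) = Ybar bet) by (apply sqrt_square; lra).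
  assert (Hthr : a_thr gam bet lam phi = / 2 * (Jv phi gam (Ybar bet) + lam * Xbar gam)) by reflexivity.
  assert (HJY := J_nonneg phi gam (Ybar bet) HG Hg HY).
  split.
  -
    intros Ha1. rewrite Hthr in Ha1. split.
    + apply wmax_of; auto; try lra.
      intros y Hy. rewrite !welfare_G by (auto; lra).
      change (IY bet (y0 bet)) with (Ybar bet). rewrite HYY.
      pose proof (IY_pos bet y Hb ltac:(lra)) as HV. pose proof (IY_le bet y Hb Hy) as HVle.
      apply G_opt1; auto.
      * apply sqrt_lt_R0. nra.
      * apply Rle_trans with (sqrt (Ybar bet * Ybar bet)); [apply sqrt_le_1_alt; apply Rmult_le_compat_l; lra | lra].
    + intros b' c' [Hc Hp].
      assert (Hsp : speed gam bet (x0 gam) (y0 bet) = 1).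
      { rewrite speed_x0 by (auto; lra). change (IY bet (y0 bet)) with (Ybar bet). rewrite HYY. field. lra. }
      split.
      * destruct (Hp (y0 bet) ltac:(lra)) as [Hp1 _]. specialize (Hp1 ltac:(lra)).
        rewrite cp_val in Hp1 by (auto; lra). rewrite Hsp in Hp1.
        assert (lam * 1 * Xbar gam - b' - a >= 0).
        { apply Rle_ge. apply Rmult_le_reg_l with (y0 bet); auto. lra. }
        rewrite Xbar_val in H by auto. unfold Rdiv in *. lra.
      * destruct (Hc (x0 gam) ltac:(lra)) as [Hc1 _]. specialize (Hc1 ltac:(lra)).
        rewrite cons_val in Hc1 by (auto; lra). rewrite Hsp in Hc1.
        change (IY bet (y0 bet)) with (Ybar bet) in Hc1. rewrite Ybar_val in Hc1 by auto.
        replace (1 / (bet - 2) * Rpower (y0 bet) (2 - bet) * x0 gam)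
          with (1 * x0 gam * (Rpower (y0 bet) (2 - bet) / (bet - 2))) by (field; lra).
        lra.
  -
    intros Ha2. rewrite Hthr in Ha2.
    assert (Hapos : 0 < a) by nra.
    pose proof (sqrt_lt_R0 _ HY) as HsY.
    set (s := Rmin (sqrt (Ybar bet) / 2) (lam * Xbar gam * sqrt (Ybar bet) / (4 * a))).
    assert (Hs0 : 0 < s).
    { unfold s. apply Rmin_glb_lt. lra. apply Rdiv_lt_0_compat; [|lra].
      apply Rmult_lt_0_compat; [nra|lra]. }
    assert (Hs1 : s <= sqrt (Ybar bet) / 2) by apply Rmin_l.
    assert (Hs2 : s <= lam * Xbar gam * sqrt (Ybar bet) / (4 * a)) by apply Rmin_r.
    assert (HsYY : sqrt (Ybar bet) * sqrt (Ybar bet) = Ybar bet) by (apply sqrt_sqrt; lra).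
    assert (Heps : s * s < Ybar bet) by nra.
    assert (HPe : Phi gam bet lam a phi (s * s) < 0).
    { unfold Phi. rewrite sqrt_square by lra.
      pose proof (J_nonneg phi gam (sqrt (Ybar bet * (s * s))) HG Hg
                  ltac:(apply sqrt_lt_R0; apply Rmult_lt_0_compat; nra)) as HJ.
      set (r := sqrt (Ybar bet) / s).
      assert (Hrs : r * s = sqrt (Ybar bet)) by (unfold r; field; lra).
      assert (Hr0 : 0 < r) by (unfold r; apply Rdiv_lt_0_compat; lra).
      assert (H4 : s * (4 * a) <= lam * Xbar gam * sqrt (Ybar bet)).
      { apply Rmult_le_reg_r with (/ (4 * a)). apply Rinv_0_lt_compat; lra.
        replace (s * (4 * a) * / (4 * a)) with s by (field; lra). exact Hs2. }
      assert (H5 : 4 * a <= lam * Xbar gam * r) by nra.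
      assert (0 <= Jv phi gam (sqrt (Ybar bet * (s * s))) * r) by nra.
      lra. }
    assert (HPY : 0 < Phi gam bet lam a phi (Ybar bet)).
    { unfold Phi. rewrite HYY. replace (sqrt (Ybar bet) / sqrt (Ybar bet)) with 1 by (field; lra). lra. }
    destruct (Ranalysis5.IVT_interv (Phi gam bet lam a phi) (s * s) (Ybar bet)) as [Vs [HVs HPVs]]; auto.
    { intros V HV. apply Phi_cont; auto. nra. }
    assert (HVsY : Vs < Ybar bet).
    { destruct HVs as [_ [H|H]]; auto. subst Vs. lra. }
    assert (HVs0 : 0 < Vs) by nra.
    set (yh := Rpower ((bet - 2) * Vs) (1 / (2 - bet))).
    assert (Hyh0 : 0 < yh) by apply Rpower_pos.
    assert (HyhP : Rpower yh (2 - bet) = (bet - 2) * Vs).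
    { unfold yh. rewrite Rpower_mult. replace (1 / (2 - bet) * (2 - bet)) with 1 by (field; lra).
      apply Rpower_1. nra. }
    assert (HIYh : IY bet yh = Vs).
    { rewrite IY_val by auto. rewrite HyhP. field. lra. }
    assert (Hyhy0 : y0 bet < yh).
    { destruct (Rlt_le_dec (y0 bet) yh) as [|Hle]; auto. exfalso.
      pose proof (Rpower_le_neg yh (y0 bet) (2 - bet) Hyh0 Hle ltac:(lra)) as P.
      rewrite HyhP in P. rewrite Ybar_val in HVsY by auto. 
      apply Rmult_lt_compat_r with (r := bet - 2) in HVsY; [|lra].
      replace (Rpower (y0 bet) (2 - bet) / (bet - 2) * (bet - 2)) with (Rpower (y0 bet) (2 - bet)) in HVsY by (field; lra).
      lra. }
    set (ms := sqrt (Ybar bet * Vs)).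
    assert (Hms : 0 < ms) by (apply sqrt_lt_R0; nra).
    assert (Hmsq : ms = sqrt (Ybar bet) * sqrt Vs) by (apply sqrt_mult; lra).
    assert (HsV : 0 < sqrt Vs) by (apply sqrt_lt_R0; lra).
    assert (HJs : Jv phi gam ms + lam * Xbar gam = 2 * a * ms / Ybar bet).
    { unfold Phi in HPVs. fold ms in HPVs.
      set (K := Jv phi gam ms + lam * Xbar gam) in *.
      set (r := sqrt (Ybar bet) / sqrt Vs) in *.
      assert (Hr : r * (ms / Ybar bet) = 1).
      { unfold r. rewrite Hmsq.
        replace (sqrt (Ybar bet) / sqrt Vs * (sqrt (Ybar bet) * sqrt Vs / Ybar bet))
          with (sqrt (Ybar bet) * sqrt (Ybar bet) / Ybar bet) by (field; lra).
        rewrite HsYY. field. lra. }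
      transitivity (K * (r * (ms / Ybar bet))). rewrite Hr; ring.
      replace (K * (r * (ms / Ybar bet))) with ((/ 2 * K * r) * 2 * (ms / Ybar bet)) by (field; lra).
      replace (/ 2 * K * r) with a by lra. unfold Rdiv. ring. }
    assert (Hmm : ms * ms = Ybar bet * Vs) by (apply sqrt_sqrt; nra).
    exists yh. split; [lra|]. split.
    { change (Phi gam bet lam a phi (IY bet yh) = 0). rewrite HIYh. exact HPVs. }
    split.
    { intros y Hy Hyeq. change (Phi gam bet lam a phi (IY bet y) = 0) in Hyeq.
      pose proof (IY_pos bet y Hb ltac:(lra)) as HV.
      assert (HVV : IY bet y = Vs).
      { destruct (Rtotal_order (IY bet y) Vs) as [Hl|[He|Hl]]; auto; exfalso.
        - pose proof (Phi_strict gam bet lam a phi _ _ HG Hg Hb Hlam HV Hl). lra.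
        - pose proof (Phi_strict gam bet lam a phi _ _ HG Hg Hb Hlam HVs0 Hl). lra. }
      rewrite IY_val in HVV by (auto; lra).
      assert (HyP : Rpower y (2 - bet) = (bet - 2) * Vs).
      { rewrite <- HVV. field. lra. }
      unfold yh. rewrite <- HyP. rewrite Rpower_mult.
      replace ((2 - bet) * (1 / (2 - bet))) with 1 by (field; lra).
      rewrite Rpower_1; lra. }
    split.
    { apply wmax_of; auto; try lra.
      intros y Hy. rewrite !welfare_G by (auto; lra).
      rewrite HIYh. fold ms.
      pose proof (IY_pos bet y Hb ltac:(lra)) as HV.
      apply G_opt2 with (ms := ms); auto; try lra.
      apply sqrt_lt_R0. nra. }
    intros b' c' [Hc Hp].
    assert (Hsp : speed gam bet (x0 gam) yh = Ybar bet / ms).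
    { rewrite speed_x0 by (auto; lra). rewrite HIYh. reflexivity. }
    assert (Hvs : 1 / (bet - 2) * Rpower yh (2 - bet) = Vs) by (rewrite HyhP; field; lra).
    rewrite Hvs. fold ms.
    split.
    + destruct (Hp (y0 bet) ltac:(lra)) as [_ Hp1]. specialize (Hp1 Hyhy0).
      destruct (Hp yh ltac:(lra)) as [Hp2 _]. specialize (Hp2 ltac:(lra)).
      rewrite cp_val in Hp1, Hp2 by (auto; lra). rewrite Hsp in Hp1, Hp2.
      assert (E1 : lam * (Ybar bet / ms) * Xbar gam - b' - a <= 0).
      { apply Rmult_le_reg_l with (y0 bet); auto. lra. }
      assert (E2 : lam * (Ybar bet / ms) * Xbar gam - b' - a >= 0).
      { apply Rle_ge. apply Rmult_le_reg_l with yh; auto. lra. }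
      assert (Hb' : b' = lam * (Ybar bet / ms) * Xbar gam - a) by lra.
      assert (HJeq : Iinf (fun x => Derive phi (ms * x) * Rpower x (1 - gam)) (x0 gam) = Jv phi gam ms).
      { unfold Jv. f_equal. apply functional_extensionality. intros x. rewrite Rmult_comm with (r1 := ms). reflexivity. }
      rewrite HJeq. replace (Jv phi gam ms) with (2 * a * ms / Ybar bet - lam * Xbar gam) by lra.
      rewrite Hb'. field. repeat split; try lra. intro Hz. assert (Hz2 : 2 * a * ms = 0) by lra. nra.
    + destruct (Hc (x0 gam) ltac:(lra)) as [Hc1 _]. specialize (Hc1 ltac:(lra)).
      rewrite cons_val in Hc1 by (auto; lra). rewrite Hsp, HIYh in Hc1.
      replace (Ybar bet / ms * x0 gam * Vs) with (ms * x0 gam) in Hc1.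
      lra. replace (Ybar bet / ms * x0 gam * Vs) with ((Ybar bet * Vs) / ms * x0 gam) by (field; lra).
      rewrite <- Hmm. field. lra.
Qed.
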